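(* Let $f=\frac1n\sum_{i=1}^n f_i$ where each $f_i:\mathbb{R}^d\to\mathbb{R}$ is $L$-smooth, and assume moreover that either each $f_i$ is $\mu$-strongly convex for some $\mu>0$, or $\inf_x f(x)>-\infty$. Let the stepsize satisfy $\gamma\le\frac1{2Ln}$. Then the iterates of No Full Grad SVRG (described in the context) satisfy, for every epoch $s\ge1$, $$\Big\|\nabla f(\omega_s)-\frac1n\sum_{t=0}^{n-1}v_s^t\Big\|^2\le 8\gamma^2L^2n^2\|v_s\|^2+32\gamma^2L^2n^2\|v_{s-1}\|^2.$$
   Context: No Full Grad SVRG: input $x_0^0\in\mathbb{R}^d$, $\omega_0=x_0^0$, $\tilde v_0^0=0$, $v_0=0$, stepsize $\gamma>0$. For epochs $s=0,1,\dots$: choose a permutation $\pi_s^0,\dots,\pi_s^{n-1}$ of the $n$ component indices (by any shuffling rule); for $t=0,\dots,n-1$ set $\tilde v_s^{t+1}=\frac{t}{t+1}\tilde v_s^t+\frac1{t+1}\nabla f_{\pi_s^t}(x_s^t)$, $v_s^t=\nabla f_{\pi_s^t}(x_s^t)-\nabla f_{\pi_s^t}(\omega_s)+v_s$, $x_s^{t+1}=x_s^t-\gamma v_s^t$; then $x_{s+1}^0=x_s^n$, $\omega_{s+1}=x_s^n$, $\tilde v_{s+1}^0=0$, $v_{s+1}=\tilde v_s^n$. *)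

(* Defs.v *)
From HB Require Import structures.
From mathcomp Require Import all_boot all_order all_algebra all_fingroup.
From mathcomp Require Import all_classical all_reals all_analysis.
Set Implicit Arguments. Unset Strict Implicit. Unset Printing Implicit Defensive.
Import Order.TTheory GRing.Theory Num.Theory.
Import numFieldNormedType.Exports.
Local Open Scope ring_scope.

Section NFGSVRG.
Variable R : realType.
Variable d : nat.

Definition dotv (u v : 'rV[R]_d) : R := \sum_(k < d) u ord0 k * v ord0 k.
Definition enorm (u : 'rV[R]_d) : R := Num.sqrt (dotv u u).

Definition is_gradient (f : 'rV[R]_d -> R) (g : 'rV[R]_d -> 'rV[R]_d) : Prop :=
  forall x, differentiable f x /\ forall h, 'd f x h = dotv (g x) h.

Definition L_smooth (L : R) (f : 'rV[R]_d -> R) (g : 'rV[R]_d -> 'rV[R]_d) : Prop :=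
  is_gradient f g /\ forall x y, enorm (g x - g y) <= L * enorm (x - y).

Definition strongly_convex (mu : R) (f : 'rV[R]_d -> R) : Prop :=
  forall (x y : 'rV[R]_d) (t : R), 0 <= t <= 1 ->
    f (t *: x + (1 - t) *: y) <=
      t * f x + (1 - t) * f y - mu / 2 * t * (1 - t) * enorm (x - y) ^+ 2.

Variable n : nat.
Variable G : 'I_n -> 'rV[R]_d -> 'rV[R]_d.   (* gradients of the f_i *)
Variable gamma : R.

(* Inner loop of epoch with permutation p, anchor w (= omega_s),
   v = v_s, start point x0 = x_s^0.
   inner t = (x_s^t, tilde v_s^t), for t <= n. *)
Fixpoint inner (p : {perm 'I_n}) (w v x0 : 'rV[R]_d) (t : nat)
  : 'rV[R]_d * 'rV[R]_d :=
  match t with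
  | 0 => (x0, 0)
  | t'.+1 =>
    let: (x, vt) := inner p w v x0 t' in
    if @insub nat (fun k => k < n)%N 'I_n t' is Some i then
      let j := p i in
      (x - gamma *: (G j x - G j w + v),
       (t'%:R / t'.+1%:R) *: vt + (1 / t'.+1%:R) *: G j x)
    else (x, vt)
  end.

Variable pi : nat -> {perm 'I_n}.
Variable x00 : 'rV[R]_d.

(* state s = (x_s^0, omega_s, v_s) *)
Fixpoint state (s : nat) : 'rV[R]_d * 'rV[R]_d * 'rV[R]_d :=
  match s with
  | 0 => (x00, x00, 0)
  | s'.+1 =>
    let: (x0, w, v) := state s' in
    let: (xn, vtn) := inner (pi s') w v x0 n in
    (xn, xn, vtn)
  end.

Definition x_it (s t : nat) : 'rV[R]_d :=
  let: (x0, w, v) := state s in (inner (pi s) w v x0 t).1.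
Definition omega (s : nat) : 'rV[R]_d := (state s).1.2.
Definition vbar (s : nat) : 'rV[R]_d := (state s).2.

(* v_s^t for t : 'I_n *)
Definition v_dir (s : nat) (t : 'I_n) : 'rV[R]_d :=
  let j := pi s t in G j (x_it s t) - G j (omega s) + vbar s.

End NFGSVRG.

(* Main.v *)
Require Import Defs.
From HB Require Import structures.
From mathcomp Require Import all_boot all_order all_algebra all_fingroup.
From mathcomp Require Import all_classical all_reals all_analysis.
From mathcomp Require Import lra ring.
Import Order.TTheory GRing.Theory Num.Theory.
Import numFieldNormedType.Exports.
Local Open Scope ring_scope.
Set Warnings "-all".

Section Norm.
Context {R : realType} {d : nat}.
Implicit Types u v w : 'rV[R]_d.

Lemma dotvC u v : dotv u v = dotv v u.
Proof. by apply: eq_bigr => k _; rewrite mulrC. Qed.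
Lemma dotvDl u w v : dotv (u + w) v = dotv u v + dotv w v.
Proof. by rewrite /dotv -big_split; apply: eq_bigr => k _; rewrite mxE mulrDl. Qed.
Lemma dotvZl a u v : dotv (a *: u) v = a * dotv u v.
Proof. by rewrite /dotv mulr_sumr; apply: eq_bigr => k _; rewrite mxE mulrA. Qed.
Lemma dotvNl u v : dotv (- u) v = - dotv u v.
Proof. by rewrite -scaleN1r dotvZl mulN1r. Qed.
Lemma dotvDr u w v : dotv v (u + w) = dotv v u + dotv v w.
Proof. by rewrite dotvC dotvDl !(dotvC v). Qed.
Lemma dotvZr a u v : dotv v (a *: u) = a * dotv v u.
Proof. by rewrite dotvC dotvZl dotvC. Qed.
Lemma dotvNr u v : dotv v (- u) = - dotv v u.
Proof. by rewrite dotvC dotvNl dotvC. Qed.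
Lemma dotv_ge0 u : 0 <= dotv u u.
Proof. by apply: sumr_ge0 => k _; rewrite -expr2 sqr_ge0. Qed.
Lemma dotv_eq0 u v : dotv u u = 0 -> dotv u v = 0.
Proof.
move=> h; apply: big1 => k _.
have hk : u ord0 k * u ord0 k = 0.
  apply: (psumr_eq0P _ h) => // i _; by rewrite -expr2 sqr_ge0.
by move/eqP: hk; rewrite mulf_eq0 orbb => /eqP ->; rewrite mul0r.
Qed.
Lemma enorm_ge0 u : 0 <= enorm u.
Proof. exact: sqrtr_ge0. Qed.
Lemma enorm_sq u : enorm u ^+ 2 = dotv u u.
Proof. by rewrite sqr_sqrtr // dotv_ge0. Qed.
Lemma CS u v : dotv u v <= enorm u * enorm v.
Proof.
set a := enorm u; set b := enorm v.
have ha : a ^+ 2 = dotv u u := enorm_sq u.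
have hb : b ^+ 2 = dotv v v := enorm_sq v.
have h0 := dotv_ge0 (b *: u - a *: v).
rewrite !(dotvDl, dotvDr, dotvNl, dotvNr, dotvZl, dotvZr) in h0.
rewrite (dotvC v u) -ha -hb in h0.
have ga : 0 <= a := enorm_ge0 u. have gb : 0 <= b := enorm_ge0 v.
have [abp|] := ltrP 0 (a * b).
  have : 0 <= (a * b) * (a * b - dotv u v). by move: h0; rewrite -/a -/b; nra.
  by rewrite pmulr_rge0 // subr_ge0.
rewrite le_eqVlt => /orP [/eqP|]; last by move=> ab; have := mulr_ge0 ga gb; lra.
move/eqP; rewrite mulf_eq0 => /orP [] /eqP h.
  by rewrite dotv_eq0 ?h ?mul0r // -ha h expr0n.
by rewrite dotvC dotv_eq0 ?h ?mulr0 // -hb h expr0n.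
Qed.
Lemma enormD u v : enorm (u + v) <= enorm u + enorm v.
Proof.
rewrite /enorm -[X in _ <= X]ger0_norm ?addr_ge0 ?enorm_ge0 //.
rewrite -sqrtr_sqr ler_sqrt ?sqr_ge0 //.
rewrite !(dotvDl, dotvDr) -!/(enorm _) sqrrD -!enorm_sq (dotvC v u).
have := CS u v; lra.
Qed.
Lemma enormZ a u : enorm (a *: u) = `|a| * enorm u.
Proof. by rewrite /enorm dotvZl dotvZr mulrA -expr2 sqrtrM ?sqr_ge0 // sqrtr_sqr. Qed.
Lemma enormN u : enorm (- u) = enorm u.
Proof. by rewrite -scaleN1r enormZ normrN normr1 mul1r. Qed.
Lemma enorm0 : enorm (0 : 'rV[R]_d) = 0.
Proof. by rewrite -(scale0r (0 : 'rV[R]_d)) enormZ normr0 mul0r. Qed.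
Lemma enormB u v : enorm (u - v) = enorm (v - u).
Proof. by rewrite -enormN opprB. Qed.
Lemma enorm_sum (I : finType) (f : I -> 'rV[R]_d) :
  enorm (\sum_i f i) <= \sum_i enorm (f i).
Proof.
apply: (big_rec2 (fun y1 y2 => enorm y1 <= y2)); first by rewrite enorm0.
move=> i y1 y2 _ h; apply: (le_trans (enormD _ _)). by rewrite lerD.
Qed.
End Norm.

Section Epoch.
Variables (R : realType) (d n : nat) (G : 'I_n -> 'rV[R]_d -> 'rV[R]_d) (gamma L : R).
Hypothesis hLip : forall i x y, enorm (G i x - G i y) <= L * enorm (x - y).
Hypothesis hL : 0 <= L.
Hypothesis hg : 0 <= gamma.
Hypothesis hgn : 2 * gamma * L * n%:R <= 1.

Lemma inner_step p w v x0 t (ht : (t < n)%N) :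
  inner G gamma p w v x0 t.+1 =
  ((inner G gamma p w v x0 t).1 - gamma *: (G (p (Ordinal ht)) (inner G gamma p w v x0 t).1 - G (p (Ordinal ht)) w + v),
   (t%:R / t.+1%:R) *: (inner G gamma p w v x0 t).2 + (1 / t.+1%:R) *: G (p (Ordinal ht)) (inner G gamma p w v x0 t).1).
Proof. by rewrite /=; case: inner => x vt /=; rewrite insubT. Qed.

Lemma inner_dist p w v t : (t <= n)%N ->
  enorm ((inner G gamma p w v w t).1 - w) <= 2 * gamma * t%:R * enorm v.
Proof.
elim: t => [|t IH] ht.
  by rewrite /= subrr enorm0 mulr0 mul0r.
rewrite (inner_step _ _ _ _ _ ht) /=.
set x := (inner G gamma p w v w t).1.
set j := p (Ordinal ht).
have IH' := IH (ltnW ht).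
have e : x - gamma *: (G j x - G j w + v) - w = (x - w) + (- (gamma *: (G j x - G j w)) + - (gamma *: v)).
  by rewrite scalerDr opprD addrAC.
rewrite e.
apply: (le_trans (enormD _ _)).
apply: (le_trans (lerD (lexx _) (enormD _ _))).
rewrite !enormN !enormZ ger0_norm //.
have hj := hLip j x w.
have hx := enorm_ge0 (x - w).
have hv := enorm_ge0 v.
have htn : t%:R <= n%:R :> R by rewrite ler_nat ltnW.
have h1 : 2 * gamma * L * t%:R <= 1.
  apply: le_trans hgn; rewrite ler_wpM2l // mulr_ge0 // mulr_ge0 //.
have t0 : 0 <= t%:R :> R by [].
have p1 : gamma * (L * enorm (x - w)) <= gamma * L * (2 * gamma * t%:R * enorm v).
  rewrite -mulrA ler_wpM2l // ler_wpM2l //.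
have p2 : gamma * enorm v * (2 * gamma * L * t%:R) <= gamma * enorm v.
  by rewrite -[X in _ <= X]mulr1 ler_wpM2l // mulr_ge0.
have p3 : gamma * enorm (G j x - G j w) <= gamma * (L * enorm (x - w)) by rewrite ler_wpM2l.
have -> : t.+1%:R = t%:R + 1 :> R by rewrite -addn1 natrD.
nra.
Qed.

Lemma inner_avg p w v x0 t : (t <= n)%N ->
  t%:R *: (inner G gamma p w v x0 t).2 =
  \sum_(k < n | (k < t)%N) G (p k) (inner G gamma p w v x0 k).1.
Proof.
elim: t => [|t IH] ht.
  by rewrite scale0r big_pred0.
rewrite (inner_step _ _ _ _ _ ht) /= (bigD1 (Ordinal ht)) //=.
rewrite (eq_bigl (fun k : 'I_n => (k < t)%N)); last first.
  move=> k; rewrite ltnS leq_eqVlt; have [e|ne] := eqVneq (val k) t.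
    rewrite e ltnn /=; apply/negbTE; rewrite negbK; apply/eqP/val_inj => //.
  have -> : k != Ordinal ht by apply: contra_neq ne => ->.
  by rewrite andbT.
rewrite -IH ?(ltnW ht) // scalerDr !scalerA addrC; congr (_ + _).
  by rewrite mulrCA divff ?mulr1 // pnatr_eq0.
by rewrite mul1r divff ?scale1r // pnatr_eq0.
Qed.

Hypothesis hn : (0 < n)%N.

Lemma sum_const_inv (c : R) : n%:R^-1 * \sum_(t < n) c = c.
Proof.
by rewrite sumr_const card_ord -[c *+ n]mulr_natr mulrCA mulVf ?mulr1 // pnatr_eq0 -lt0n.
Qed.

Lemma T1 (p : {perm 'I_n}) w v :
  enorm (n%:R^-1 *: (\sum_(i < n) G i w - \sum_(t < n) G (p t) (inner G gamma p w v w t).1))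
  <= 2 * gamma * L * n%:R * enorm v.
Proof.
rewrite (reindex_perm p) /= -sumrB enormZ ger0_norm ?invr_ge0 //.
rewrite -[X in _ <= X]sum_const_inv ler_wpM2l ?invr_ge0 //.
apply: (le_trans (enorm_sum _ _)); apply: ler_sum => t _.
apply: (le_trans (hLip _ _ _)); rewrite enormB.
have := inner_dist p w v _ (ltnW (ltn_ord t)).
have htn : (t%:R <= n%:R :> R) by rewrite ler_nat ltnW.
set a := enorm _; move=> ha.
have h1 : L * a <= L * (2 * gamma * t%:R * enorm v) by rewrite ler_wpM2l.
have h2 : 0 <= (n%:R - t%:R) * (gamma * L * enorm v).
  by rewrite mulr_ge0 ?subr_ge0 // !mulr_ge0 // enorm_ge0.
nra.
Qed.

Lemma inner_avgn (p : {perm 'I_n}) w v x0 :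
  (inner G gamma p w v x0 n).2 = n%:R^-1 *: \sum_(t < n) G (p t) (inner G gamma p w v x0 t).1.
Proof.
have := inner_avg p w v x0 _ (leqnn n).
rewrite (eq_bigl xpredT) => [h|k]; last by rewrite ltn_ord.
by rewrite -h scalerA mulVf ?scale1r // pnatr_eq0 -lt0n.
Qed.

Lemma T2 (p : {perm 'I_n}) w v :
  enorm (n%:R^-1 *: \sum_(i < n) G i (inner G gamma p w v w n).1 - (inner G gamma p w v w n).2)
  <= 4 * gamma * L * n%:R * enorm v.
Proof.
rewrite inner_avgn (reindex_perm p) /= -scalerBr -sumrB enormZ ger0_norm ?invr_ge0 //.
rewrite -[X in _ <= X]sum_const_inv ler_wpM2l ?invr_ge0 //.
apply: (le_trans (enorm_sum _ _)); apply: ler_sum => t _.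
apply: (le_trans (hLip _ _ _)).
set X := (inner G gamma p w v w n).1.
set Y := (inner G gamma p w v w t).1.
have e : X - Y = (X - w) + - (Y - w) by rewrite opprB addrA subrK.
rewrite e; have hD := enormD (X - w) (- (Y - w)); rewrite enormN in hD.
have hX := inner_dist p w v _ (leqnn n).
have hY := inner_dist p w v _ (ltnW (ltn_ord t)).
rewrite -/X in hX; rewrite -/Y in hY.
have htn : (t%:R <= n%:R :> R) by rewrite ler_nat ltnW.
have h1 : L * enorm (X - w + - (Y - w)) <= L * (2 * gamma * n%:R * enorm v + 2 * gamma * t%:R * enorm v).
  by rewrite ler_wpM2l //; apply: (le_trans hD); apply: lerD.
have h2 : 0 <= (n%:R - t%:R) * (gamma * L * enorm v).
  by rewrite mulr_ge0 ?subr_ge0 // !mulr_ge0 // enorm_ge0.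
nra.
Qed.
End Epoch.

Section States.
Variables (R : realType) (d n : nat) (G : 'I_n -> 'rV[R]_d -> 'rV[R]_d) (gamma : R)
  (pi : nat -> {perm 'I_n}) (x00 : 'rV[R]_d).

Lemma state_x0 s : (state G gamma pi x00 s).1.1 = (state G gamma pi x00 s).1.2.
Proof.
case: s => [|s] //=.
by case: state => [[x0 w] v]; case: inner.
Qed.

Lemma x_it_eq s t : x_it G gamma pi x00 s t =
  (inner G gamma (pi s) (omega G gamma pi x00 s) (vbar G gamma pi x00 s) (omega G gamma pi x00 s) t).1.
Proof.
rewrite /x_it /omega /vbar; have := state_x0 s.
by case: state => [[x0 w] v] /= ->.
Qed.

Lemma omega_S s : omega G gamma pi x00 s.+1 =
  (inner G gamma (pi s) (omega G gamma pi x00 s) (vbar G gamma pi x00 s) (omega G gamma pi x00 s) n).1.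
Proof.
rewrite /omega /vbar /=; have := state_x0 s.
by case: state => [[x0 w] v] /= ->; case: inner.
Qed.

Lemma vbar_S s : vbar G gamma pi x00 s.+1 =
  (inner G gamma (pi s) (omega G gamma pi x00 s) (vbar G gamma pi x00 s) (omega G gamma pi x00 s) n).2.
Proof.
rewrite /omega /vbar /=; have := state_x0 s.
by case: state => [[x0 w] v] /= ->; case: inner.
Qed.
End States.

Theorem lemma2 (R : realType) (d n : nat) (hn : (0 < n)%N)
  (F : 'I_n -> 'rV[R]_d -> R) (G : 'I_n -> 'rV[R]_d -> 'rV[R]_d)
  (L gamma : R) (pi : nat -> {perm 'I_n}) (x00 : 'rV[R]_d) :
  0 < L ->
  (forall i, L_smooth L (F i) (G i)) ->
  ((exists mu : R, 0 < mu /\ forall i, strongly_convex mu (F i)) \/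
   (exists m : R, forall x, m <= n%:R^-1 * \sum_(i < n) F i x)) ->
  0 < gamma -> gamma <= 1 / (2 * L * n%:R) ->
  forall s : nat, (1 <= s)%N ->
    enorm (n%:R^-1 *: \sum_(i < n) G i (omega G gamma pi x00 s)
           - n%:R^-1 *: \sum_(t < n) v_dir G gamma pi x00 s t) ^+ 2
    <= 8 * gamma ^+ 2 * L ^+ 2 * n%:R ^+ 2 * enorm (vbar G gamma pi x00 s) ^+ 2
     + 32 * gamma ^+ 2 * L ^+ 2 * n%:R ^+ 2 * enorm (vbar G gamma pi x00 s.-1) ^+ 2.
Proof.
move=> hL0 hsm _ hg0 hgam s hs.
have hLip : forall i x y, enorm (G i x - G i y) <= L * enorm (x - y).
  by move=> i x y; exact: (hsm i).2.
have hL : 0 <= L by apply: ltW.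
have hg : 0 <= gamma by apply: ltW.
have hgn : 2 * gamma * L * n%:R <= 1.
  have hp : 0 < 2 * L * n%:R by rewrite !mulr_gt0 // ltr0n.
  move: hgam; rewrite ler_pdivlMr // => h; apply: le_trans h; rewrite le_eqVlt; apply/orP; left; apply/eqP; ring.
case: s hs => [//|s] _.
have hB := @T2 R d n G gamma L hLip hL hg hgn hn (pi s) (omega G gamma pi x00 s) (vbar G gamma pi x00 s).
rewrite -omega_S -vbar_S in hB.
set w := omega G gamma pi x00 s.+1 in hB *.
set v := vbar G gamma pi x00 s.+1 in hB *.
set p := pi s.+1.
have hA := @T1 R d n G gamma L hLip hL hg hgn hn p w v.
rewrite /v_dir -/w -/v -/p.
set X := fun t => (inner G gamma p w v w t).1.
set S := \sum_(i < n) G i w.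
set SX := \sum_(t < n) G (p t) (X t).
have eS : \sum_(t < n) G (p t) w = S by rewrite /S [RHS](reindex_perm p).
have nz : n%:R != 0 :> R by rewrite pnatr_eq0 -lt0n.
have e : \sum_(t < n) (G (p t) (x_it G gamma pi x00 s.+1 t) - G (p t) w + v) = SX - S + v *+ n.
  rewrite big_split /= sumrB eS sumr_const card_ord; congr (_ - _ + _).
  by apply: eq_bigr => t _; rewrite x_it_eq.
rewrite e -[v *+ n]scaler_nat scalerDr scalerA mulVf // scale1r.
have -> : n%:R^-1 *: S - (n%:R^-1 *: (SX - S) + v) =
          n%:R^-1 *: (S - SX) + (n%:R^-1 *: S - v).
  rewrite !scalerBr opprD opprB addrA.
  by rewrite [RHS]addrA (addrC (n%:R^-1 *: S) (_ - _)).
rewrite /=.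
set a := enorm (n%:R^-1 *: (S - SX)).
set b := enorm (n%:R^-1 *: S - v).
have hA' : a <= 2 * gamma * L * n%:R * enorm v := hA.
have hB' : b <= 4 * gamma * L * n%:R * enorm (vbar G gamma pi x00 s) := hB.
have hD := enormD (n%:R^-1 *: (S - SX)) (n%:R^-1 *: S - v).
rewrite -/a -/b in hD.
set c := enorm _ in hD *.
have c0 : 0 <= c := enorm_ge0 _.
have a0 : 0 <= a := enorm_ge0 _.
have b0 : 0 <= b := enorm_ge0 _.
set e1 := 2 * gamma * L * n%:R * enorm v in hA'.
set e2 := 4 * gamma * L * n%:R * enorm (vbar G gamma pi x00 s) in hB'.
have h1 : c * c <= (a + b) * (a + b) by apply: ler_pM.
have h2 : a * a <= e1 * e1 by apply: ler_pM.
have h3 : b * b <= e2 * e2 by apply: ler_pM.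
have h4 : 0 <= (a - b) * (a - b) by rewrite -expr2 sqr_ge0.
have -> : 8 * gamma ^+ 2 * L ^+ 2 * n%:R ^+ 2 * enorm v ^+ 2 +
  32 * gamma ^+ 2 * L ^+ 2 * n%:R ^+ 2 * enorm (vbar G gamma pi x00 s) ^+ 2
  = 2 * (e1 * e1) + 2 * (e2 * e2) by rewrite /e1 /e2; ring.
rewrite expr2; nra.
Qed.
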